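(* Let $n,k$ be positive integers and $i\in\{1,\ldots,n\}$ such that $k\cdot\frac{i}{n}\cdot \frac{n-i}{n}< 1$, $n\ge 8k$, and $i>n/2$. If $H\sim\text{Hyp}(n,i,k)$, then $\mathbb{P}(H \ge ik/n) \ge \frac{k}{n}$.
   Context: $\text{Hyp}(n,i,k)$ denotes the hypergeometric distribution: the number of black marbles in a sample without replacement of size $k$ from an urn with $i$ black and $n-i$ white marbles, i.e. $\mathbb{P}(H=j)=\binom{i}{j}\binom{n-i}{k-j}/\binom{n}{k}$. *)

(* Defs.v *)
From mathcomp Require Import all_boot all_order all_algebra.
Set Implicit Arguments. Unset Strict Implicit. Unset Printing Implicit Defensive.
Import Order.TTheory GRing.Theory Num.Theory.
Local Open Scope ring_scope.

(* P(H = j) for H ~ Hyp(n,i,k): C(i,j) C(n-i,k-j) / C(n,k), as a rational.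
   ('C(a,b) = 0 when b > a; note k - j is truncated but j ranges over 0..k.) *)
Definition hyp_pmf (n i k j : nat) : rat :=
  ('C(i, j) * 'C(n - i, k - j))%:R / ('C(n, k))%:R.

Definition hyp_tail (n i k : nat) (x : rat) : rat :=
  \sum_(0 <= j < k.+1 | x <= j%:R) hyp_pmf n i k j.

(* Main.v *)
Require Import Defs.
From mathcomp Require Import all_boot all_order all_algebra.
From mathcomp Require Import ring lra.
Import Order.TTheory GRing.Theory Num.Theory.
Local Open Scope ring_scope.
Ltac pos := lazymatch goal with
 | |- is_true (Order.le _ (_ - _)) => assumption
 | |- is_true (Order.le _ (_ + _)) => apply: addr_ge0; pos
 | |- is_true (Order.le _ (_ * _)) => apply: mulr_ge0; pos
 | |- is_true (Order.le _ (_ ^+ _)) => apply: exprn_ge0; pos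
 | |- _ => first [apply: ler0n | apply: ler01 | apply: lexx]
 end.
From mathcomp Require Import zify.

Lemma powle (a b : rat) (p : nat) : 0 <= a -> a <= b -> a ^+ p <= b ^+ p.
Proof.
move=> a0 ab; elim: p => [|p IH]; first by rewrite !expr0.
rewrite !exprS; apply: ler_pM => //; exact: exprn_ge0.
Qed.

Lemma bernoulli (c : rat) (j : nat) : 0 <= c -> 1 - j%:R * (1 - c) <= c ^+ j.
Proof.
move=> c0; elim: j => [|j IH]; first by rewrite expr0 mul0r subr0.
rewrite exprSr.
have h1 : (1 - j%:R * (1 - c)) * c <= c ^+ j * c by exact: ler_wpM2r.
apply: le_trans h1; rewrite -subr_ge0 (_ : _ - _ = j%:R * (1 - c)^+2); last by rewrite -addn1 natrD; ring.
by apply: mulr_ge0 => //; apply: sqr_ge0.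
Qed.

Lemma nat_ineq (i n m t : nat) : (t < m)%N -> (m < i)%N -> (i <= n)%N ->
  ((i - m) * (n.-1 - t) <= (i - t) * (n - m))%N.
Proof. move=> *. nia. Qed.


Lemma bin_lb (i N m : nat) (c : rat) : 0 <= c ->
  (forall t, (t < m)%N -> c * (N - t)%:R <= (i - t)%:R) ->
  c ^+ m * 'C(N, m)%:R <= 'C(i, m)%:R.
Proof.
elim: m => [|m IH] c0 h; first by rewrite expr0 mul1r !bin0.
have IH' := IH c0 (fun t ht => h t (leqW ht)).
have E1 : (m.+1)%:R * 'C(i,m.+1)%:R = (i-m)%:R * 'C(i,m)%:R :> rat by rewrite -!natrM mul_bin_left.
have E2 : (m.+1)%:R * 'C(N,m.+1)%:R = (N-m)%:R * 'C(N,m)%:R :> rat by rewrite -!natrM mul_bin_left.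
rewrite -(ler_pM2l (ltr0Sn _ m)) E1.
rewrite (_ : _ * (c ^+ m.+1 * _) = (c * (N - m)%:R) * (c ^+ m * 'C(N, m)%:R)); last first.
  have T1 : (m.+1)%:R * (c ^+ m.+1 * 'C(N, m.+1)%:R) = c * c^+m * ((m.+1)%:R * 'C(N,m.+1)%:R) by rewrite exprS; ring.
  by rewrite T1 E2; ring.
apply: ler_pM; [by apply: mulr_ge0 => //; apply: ler0n | by apply: mulr_ge0; [apply: exprn_ge0 | apply: ler0n] | exact: h | exact: IH'].
Qed.

Lemma bridgeA0 (k n j w D : rat) : 0 < k -> 0 <= j -> 0 <= w -> k*w + 1 <= n ->
  0 <= k*D - j*(n-1) -> 0 <= k*D - (n-1) ->
  k^+5 * D^+3 <= (k*D - j*(n-1))^+3 * (k*D-(n-1))^+1 ->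
  0 <= D - j*w /\ k * D^+3 <= (D - j*w)^+3 * (D-w)^+0 * (D - w).
Proof.
move=> k0 j0 w0 hw h1 h2 hP.
have e1 : k*D - j*(n-1) <= k*(D - j*w).
  rewrite -subr_ge0 (_ : k*(D - j*w) - (k*D - j*(n-1)) = j*(n-1-k*w)); last by ring.
  by apply: mulr_ge0 => //; lra.
have e2 : k*D - (n-1) <= k*(D - w) by lra.
have nn : 0 <= D - j*w by rewrite -(pmulr_rge0 _ k0); exact: le_trans h1 e1.
split => //.
have key : (k*D - j*(n-1))^+3 * (k*D-(n-1))^+1 <= (k*(D - j*w))^+3 * (k*(D-w))^+1.
  by apply: ler_pM; [apply: exprn_ge0 | apply: exprn_ge0 | apply: powle | apply: powle].
rewrite -(ler_pM2l (exprn_gt0 4 k0)).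
rewrite (_ : k^+4 * (k * D^+3) = k^+5 * D^+3); last by ring.
rewrite (_ : k^+4 * ((D - j*w)^+3 * (D-w)^+0 * (D - w)) = (k*(D - j*w))^+3 * (k*(D-w))^+1); last by ring.
exact: le_trans hP key.
Qed.

Lemma bridgeB0 (k m den n j w D : rat) : 0 < k -> 0 < den -> 0 <= j -> 0 <= m -> 0 <= w -> 0 <= D -> 0 <= n ->
  n <= k*w -> den*w <= n -> m = k - 1 ->
  0 <= den*D - j*n -> 0 <= den*D - n ->
  k*k*D^+3*den^+3 <= (k*D+m*n)*(den*D-j*n)^+3*(den*D-n)^+0 ->
  0 <= D - j*w /\ k * D^+3 <= (D-j*w)^+3 * (D-w)^+0 * (D - w + k*w).
Proof.
move=> k0 d0 j0 m0 w0 D0 n0 hB hd hm h1 h2 hP.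
have e0 : k*D + m*n <= k*(D - w + k*w).
  rewrite -subr_ge0 (_ : k*(D - w + k*w) - (k*D + m*n) = m*(k*w - n)); last by rewrite hm; ring.
  by apply: mulr_ge0 => //; lra.
have e1 : den*D - j*n <= den*(D - j*w).
  rewrite -subr_ge0 (_ : den*(D - j*w) - (den*D - j*n) = j*(n - den*w)); last by ring.
  by apply: mulr_ge0 => //; lra.
have e2 : den*D - n <= den*(D - w) by lra.
have nn : 0 <= D - j*w by rewrite -(pmulr_rge0 _ d0); exact: le_trans h1 e1.
split => //.
have g0 : 0 <= k*D + m*n by apply: addr_ge0; apply: mulr_ge0 => //; lra.
have key : (k*D+m*n)*(den*D-j*n)^+3*(den*D-n)^+0 <= (k*(D - w + k*w))*(den*(D-j*w))^+3*(den*(D-w))^+0.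
  apply: ler_pM; [apply: mulr_ge0 => //; apply: exprn_ge0 => // | apply: exprn_ge0 => // | | apply: powle => //].
  by apply: ler_pM => //; [apply: exprn_ge0 | apply: powle].
rewrite -(ler_pM2l (mulr_gt0 k0 (exprn_gt0 3 d0))).
rewrite (_ : k * den^+3 * (k * D^+3) = k*k*D^+3*den^+3); last by ring.
rewrite (_ : k * den^+3 * ((D-j*w)^+3 * (D-w)^+0 * (D - w + k*w)) = (k*(D - w + k*w))*(den*(D-j*w))^+3*(den*(D-w))^+0); last by ring.
exact: le_trans hP key.
Qed.

Lemma bridgeA1 (k n j w D : rat) : 0 < k -> 0 <= j -> 0 <= w -> k*w + 1 <= n ->
  0 <= k*D - j*(n-1) -> 0 <= k*D - (n-1) ->
  k^+6 * D^+4 <= (k*D - j*(n-1))^+3 * (k*D-(n-1))^+2 ->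
  0 <= D - j*w /\ k * D^+4 <= (D - j*w)^+3 * (D-w)^+1 * (D - w).
Proof.
move=> k0 j0 w0 hw h1 h2 hP.
have e1 : k*D - j*(n-1) <= k*(D - j*w).
  rewrite -subr_ge0 (_ : k*(D - j*w) - (k*D - j*(n-1)) = j*(n-1-k*w)); last by ring.
  by apply: mulr_ge0 => //; lra.
have e2 : k*D - (n-1) <= k*(D - w) by lra.
have nn : 0 <= D - j*w by rewrite -(pmulr_rge0 _ k0); exact: le_trans h1 e1.
split => //.
have key : (k*D - j*(n-1))^+3 * (k*D-(n-1))^+2 <= (k*(D - j*w))^+3 * (k*(D-w))^+2.
  by apply: ler_pM; [apply: exprn_ge0 | apply: exprn_ge0 | apply: powle | apply: powle].
rewrite -(ler_pM2l (exprn_gt0 5 k0)).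
rewrite (_ : k^+5 * (k * D^+4) = k^+6 * D^+4); last by ring.
rewrite (_ : k^+5 * ((D - j*w)^+3 * (D-w)^+1 * (D - w)) = (k*(D - j*w))^+3 * (k*(D-w))^+2); last by ring.
exact: le_trans hP key.
Qed.

Lemma bridgeB1 (k m den n j w D : rat) : 0 < k -> 0 < den -> 0 <= j -> 0 <= m -> 0 <= w -> 0 <= D -> 0 <= n ->
  n <= k*w -> den*w <= n -> m = k - 1 ->
  0 <= den*D - j*n -> 0 <= den*D - n ->
  k*k*D^+4*den^+4 <= (k*D+m*n)*(den*D-j*n)^+3*(den*D-n)^+1 ->
  0 <= D - j*w /\ k * D^+4 <= (D-j*w)^+3 * (D-w)^+1 * (D - w + k*w).
Proof.
move=> k0 d0 j0 m0 w0 D0 n0 hB hd hm h1 h2 hP.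
have e0 : k*D + m*n <= k*(D - w + k*w).
  rewrite -subr_ge0 (_ : k*(D - w + k*w) - (k*D + m*n) = m*(k*w - n)); last by rewrite hm; ring.
  by apply: mulr_ge0 => //; lra.
have e1 : den*D - j*n <= den*(D - j*w).
  rewrite -subr_ge0 (_ : den*(D - j*w) - (den*D - j*n) = j*(n - den*w)); last by ring.
  by apply: mulr_ge0 => //; lra.
have e2 : den*D - n <= den*(D - w) by lra.
have nn : 0 <= D - j*w by rewrite -(pmulr_rge0 _ d0); exact: le_trans h1 e1.
split => //.
have g0 : 0 <= k*D + m*n by apply: addr_ge0; apply: mulr_ge0 => //; lra.
have key : (k*D+m*n)*(den*D-j*n)^+3*(den*D-n)^+1 <= (k*(D - w + k*w))*(den*(D-j*w))^+3*(den*(D-w))^+1.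
  apply: ler_pM; [apply: mulr_ge0 => //; apply: exprn_ge0 => // | apply: exprn_ge0 => // | | apply: powle => //].
  by apply: ler_pM => //; [apply: exprn_ge0 | apply: powle].
rewrite -(ler_pM2l (mulr_gt0 k0 (exprn_gt0 4 d0))).
rewrite (_ : k * den^+4 * (k * D^+4) = k*k*D^+4*den^+4); last by ring.
rewrite (_ : k * den^+4 * ((D-j*w)^+3 * (D-w)^+1 * (D - w + k*w)) = (k*(D - w + k*w))*(den*(D-j*w))^+3*(den*(D-w))^+1); last by ring.
exact: le_trans hP key.
Qed.

Lemma bridgeA2 (k n j w D : rat) : 0 < k -> 0 <= j -> 0 <= w -> k*w + 1 <= n ->
  0 <= k*D - j*(n-1) -> 0 <= k*D - (n-1) ->
  k^+7 * D^+5 <= (k*D - j*(n-1))^+3 * (k*D-(n-1))^+3 ->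
  0 <= D - j*w /\ k * D^+5 <= (D - j*w)^+3 * (D-w)^+2 * (D - w).
Proof.
move=> k0 j0 w0 hw h1 h2 hP.
have e1 : k*D - j*(n-1) <= k*(D - j*w).
  rewrite -subr_ge0 (_ : k*(D - j*w) - (k*D - j*(n-1)) = j*(n-1-k*w)); last by ring.
  by apply: mulr_ge0 => //; lra.
have e2 : k*D - (n-1) <= k*(D - w) by lra.
have nn : 0 <= D - j*w by rewrite -(pmulr_rge0 _ k0); exact: le_trans h1 e1.
split => //.
have key : (k*D - j*(n-1))^+3 * (k*D-(n-1))^+3 <= (k*(D - j*w))^+3 * (k*(D-w))^+3.
  by apply: ler_pM; [apply: exprn_ge0 | apply: exprn_ge0 | apply: powle | apply: powle].
rewrite -(ler_pM2l (exprn_gt0 6 k0)).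
rewrite (_ : k^+6 * (k * D^+5) = k^+7 * D^+5); last by ring.
rewrite (_ : k^+6 * ((D - j*w)^+3 * (D-w)^+2 * (D - w)) = (k*(D - j*w))^+3 * (k*(D-w))^+3); last by ring.
exact: le_trans hP key.
Qed.

Lemma bridgeB2 (k m den n j w D : rat) : 0 < k -> 0 < den -> 0 <= j -> 0 <= m -> 0 <= w -> 0 <= D -> 0 <= n ->
  n <= k*w -> den*w <= n -> m = k - 1 ->
  0 <= den*D - j*n -> 0 <= den*D - n ->
  k*k*D^+5*den^+5 <= (k*D+m*n)*(den*D-j*n)^+3*(den*D-n)^+2 ->
  0 <= D - j*w /\ k * D^+5 <= (D-j*w)^+3 * (D-w)^+2 * (D - w + k*w).
Proof.
move=> k0 d0 j0 m0 w0 D0 n0 hB hd hm h1 h2 hP.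
have e0 : k*D + m*n <= k*(D - w + k*w).
  rewrite -subr_ge0 (_ : k*(D - w + k*w) - (k*D + m*n) = m*(k*w - n)); last by rewrite hm; ring.
  by apply: mulr_ge0 => //; lra.
have e1 : den*D - j*n <= den*(D - j*w).
  rewrite -subr_ge0 (_ : den*(D - j*w) - (den*D - j*n) = j*(n - den*w)); last by ring.
  by apply: mulr_ge0 => //; lra.
have e2 : den*D - n <= den*(D - w) by lra.
have nn : 0 <= D - j*w by rewrite -(pmulr_rge0 _ d0); exact: le_trans h1 e1.
split => //.
have g0 : 0 <= k*D + m*n by apply: addr_ge0; apply: mulr_ge0 => //; lra.
have key : (k*D+m*n)*(den*D-j*n)^+3*(den*D-n)^+2 <= (k*(D - w + k*w))*(den*(D-j*w))^+3*(den*(D-w))^+2.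
  apply: ler_pM; [apply: mulr_ge0 => //; apply: exprn_ge0 => // | apply: exprn_ge0 => // | | apply: powle => //].
  by apply: ler_pM => //; [apply: exprn_ge0 | apply: powle].
rewrite -(ler_pM2l (mulr_gt0 k0 (exprn_gt0 5 d0))).
rewrite (_ : k * den^+5 * (k * D^+5) = k*k*D^+5*den^+5); last by ring.
rewrite (_ : k * den^+5 * ((D-j*w)^+3 * (D-w)^+2 * (D - w + k*w)) = (k*(D - w + k*w))*(den*(D-j*w))^+3*(den*(D-w))^+2); last by ring.
exact: le_trans hP key.
Qed.

Lemma polyA0 (j n : rat) : 0 <= j -> 8*(3*j+1) <= n ->
  (3*j+1)^+5 * (n-(3*j+0))^+3 <= ((3*j+1)*(n-(3*j+0)) - j*(n-1))^+3 * ((3*j+1)*(n-(3*j+0))-(n-1))^+1.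
Proof.
move=> hj hn.
have hJ : 0 <= j - 0 by rewrite subr_ge0.
have he : 0 <= n - (8*(3*j+1)) by rewrite subr_ge0.
rewrite -subr_ge0 (_ : ((3*j+1)*(n-(3*j+0)) - j*(n-1))^+3 * ((3*j+1)*(n-(3*j+0))-(n-1))^+1 - (3*j+1)^+5 * (n-(3*j+0))^+3 = (63*100+36)*((j-0)^+1) + (38*100+88)*((j-0)^+1*(n-(8*(3*j+1)))^+1) + (8*100+67)*((j-0)^+1*(n-(8*(3*j+1)))^+2) + 84*((j-0)^+1*(n-(8*(3*j+1)))^+3) + 3*((j-0)^+1*(n-(8*(3*j+1)))^+4) + ((11*100+4)*100+72)*((j-0)^+2) + ((5*100+64)*100+81)*((j-0)^+2*(n-(8*(3*j+1)))^+1) + ((1*100+1)*100+10)*((j-0)^+2*(n-(8*(3*j+1)))^+2) + (7*100+41)*((j-0)^+2*(n-(8*(3*j+1)))^+3) + 18*((j-0)^+2*(n-(8*(3*j+1)))^+4) + ((80*100+15)*100+39)*((j-0)^+3) + ((33*100+13)*100+23)*((j-0)^+3*(n-(8*(3*j+1)))^+1) + ((4*100+56)*100+9)*((j-0)^+3*(n-(8*(3*j+1)))^+2) + (23*100+75)*((j-0)^+3*(n-(8*(3*j+1)))^+3) + 36*((j-0)^+3*(n-(8*(3*j+1)))^+4) + (((3*100+11)*100+92)*100+17)*((j-0)^+4) + ((99*100+93)*100+57)*((j-0)^+4*(n-(8*(3*j+1)))^+1) + ((9*100+91)*100+89)*((j-0)^+4*(n-(8*(3*j+1)))^+2) + (32*100+91)*((j-0)^+4*(n-(8*(3*j+1)))^+3)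 + 24*((j-0)^+4*(n-(8*(3*j+1)))^+4) + (((6*100+97)*100+78)*100+44)*((j-0)^+5) + (((1*100+62)*100+45)*100+63)*((j-0)^+5*(n-(8*(3*j+1)))^+1) + ((10*100+37)*100+34)*((j-0)^+5*(n-(8*(3*j+1)))^+2) + (16*100+65)*((j-0)^+5*(n-(8*(3*j+1)))^+3) + (((8*100+87)*100+73)*100+3)*((j-0)^+6) + (((1*100+33)*100+89)*100+30)*((j-0)^+6*(n-(8*(3*j+1)))^+1) + ((4*100+15)*100+53)*((j-0)^+6*(n-(8*(3*j+1)))^+2) + (((5*100+84)*100+69)*100+4)*((j-0)^+7) + ((43*100+14)*100+6)*((j-0)^+7*(n-(8*(3*j+1)))^+1) + (((1*100+48)*100+66)*100+74)*((j-0)^+8)); last by ring.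
pos.
Qed.

Lemma nnA0_1 (j n : rat) : 0 <= j -> 8*(3*j+1) <= n ->
  0 <= (3*j+1)*(n-(3*j+0)) - j*(n-1).
Proof.
move=> hj hn.
have hJ : 0 <= j - 0 by rewrite subr_ge0.
have he : 0 <= n - (8*(3*j+1)) by rewrite subr_ge0.
rewrite -subr_ge0 (_ : (3*j+1)*(n-(3*j+0)) - j*(n-1) - 0 = 8 + 1*((n-(8*(3*j+1)))^+1) + 38*((j-0)^+1) + 2*((j-0)^+1*(n-(8*(3*j+1)))^+1) + 39*((j-0)^+2)); last by ring.
pos.
Qed.

Lemma nnA0_2 (j n : rat) : 0 <= j -> 8*(3*j+1) <= n ->
  0 <= (3*j+1)*(n-(3*j+0)) - (n-1).
Proof.
move=> hj hn.
have hJ : 0 <= j - 0 by rewrite subr_ge0.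
have he : 0 <= n - (8*(3*j+1)) by rewrite subr_ge0.
rewrite -subr_ge0 (_ : (3*j+1)*(n-(3*j+0)) - (n-1) - 0 = 1 + 21*((j-0)^+1) + 3*((j-0)^+1*(n-(8*(3*j+1)))^+1) + 63*((j-0)^+2)); last by ring.
pos.
Qed.

Lemma polyA1 (j n : rat) : 0 <= j -> 8*(3*j+2) <= n ->
  (3*j+2)^+6 * (n-(3*j+1))^+4 <= ((3*j+2)*(n-(3*j+1)) - j*(n-1))^+3 * ((3*j+2)*(n-(3*j+1))-(n-1))^+2.
Proof.
move=> hj hn.
have hJ : 0 <= j - 0 by rewrite subr_ge0.
have he : 0 <= n - (8*(3*j+2)) by rewrite subr_ge0.
rewrite -subr_ge0 (_ : ((3*j+2)*(n-(3*j+1)) - j*(n-1))^+3 * ((3*j+2)*(n-(3*j+1))-(n-1))^+2 - (3*j+2)^+6 * (n-(3*j+1))^+4 = (((2*100+83)*100+50)*100+0) + (((1*100+16)*100+10)*100+0)*((n-(8*(3*j+2)))^+1) + ((18*100+36)*100+0)*((n-(8*(3*j+2)))^+2) + ((1*100+41)*100+60)*((n-(8*(3*j+2)))^+3) + (5*100+36)*((n-(8*(3*j+2)))^+4) + 8*((n-(8*(3*j+2)))^+5) + (((47*100+46)*100+60)*100+0)*((j-0)^+1) + (((17*100+51)*100+22)*100+0)*((j-0)^+1*(n-(8*(3*j+2)))^+1) + (((2*100+47)*100+96)*100+80)*((j-0)^+1*(n-(8*(3*j+2)))^+2) + ((16*100+95)*100+84)*((j-0)^+1*(n-(8*(3*j+2)))^+3)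 + (56*100+16)*((j-0)^+1*(n-(8*(3*j+2)))^+4) + 72*((j-0)^+1*(n-(8*(3*j+2)))^+5) + ((((3*100+43)*100+52)*100+91)*100+0)*((j-0)^+2) + ((((1*100+12)*100+67)*100+74)*100+80)*((j-0)^+2*(n-(8*(3*j+2)))^+1) + (((14*100+1)*100+53)*100+76)*((j-0)^+2*(n-(8*(3*j+2)))^+2) + ((82*100+74)*100+96)*((j-0)^+2*(n-(8*(3*j+2)))^+3) + ((2*100+30)*100+76)*((j-0)^+2*(n-(8*(3*j+2)))^+4) + (2*100+40)*((j-0)^+2*(n-(8*(3*j+2)))^+5) + ((((14*100+22)*100+29)*100+19)*100+60)*((j-0)^+3) + ((((4*100+7)*100+59)*100+93)*100+44)*((j-0)^+3*(n-(8*(3*j+2)))^+1) + (((43*100+45)*100+42)*100+32)*((j-0)^+3*(n-(8*(3*j+2)))^+2) + (((2*100+13)*100+82)*100+56)*((j-0)^+3*(n-(8*(3*j+2)))^+3) + ((4*100+76)*100+16)*((j-0)^+3*(n-(8*(3*j+2)))^+4) + (3*100+68)*((j-0)^+3*(n-(8*(3*j+2)))^+5) + ((((37*100+39)*100+60)*100+68)*100+66)*((j-0)^+4) + ((((9*100+15)*100+50)*100+49)*100+30)*((j-0)^+4*(n-(8*(3*j+2)))^+1) + (((81*100+1)*100+11)*100+78)*((j-0)^+4*(n-(8*(3*j+2)))^+2) + (((3*100+16)*100+87)*100+74)*((j-0)^+4*(n-(8*(3*j+2)))^+3) + ((5*100+23)*100+8)*((j-0)^+4*(n-(8*(3*j+2)))^+4)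 + (2*100+64)*((j-0)^+4*(n-(8*(3*j+2)))^+5) + ((((65*100+28)*100+62)*100+7)*100+36)*((j-0)^+5) + ((((13*100+24)*100+91)*100+71)*100+62)*((j-0)^+5*(n-(8*(3*j+2)))^+1) + (((93*100+8)*100+71)*100+44)*((j-0)^+5*(n-(8*(3*j+2)))^+2) + (((2*100+69)*100+95)*100+14)*((j-0)^+5*(n-(8*(3*j+2)))^+3) + ((2*100+91)*100+96)*((j-0)^+5*(n-(8*(3*j+2)))^+4) + 72*((j-0)^+5*(n-(8*(3*j+2)))^+5) + ((((76*100+57)*100+18)*100+7)*100+76)*((j-0)^+6) + ((((12*100+34)*100+60)*100+16)*100+76)*((j-0)^+6*(n-(8*(3*j+2)))^+1) + (((64*100+38)*100+53)*100+7)*((j-0)^+6*(n-(8*(3*j+2)))^+2) + (((1*100+22)*100+65)*100+2)*((j-0)^+6*(n-(8*(3*j+2)))^+3) + (65*100+7)*((j-0)^+6*(n-(8*(3*j+2)))^+4) + ((((59*100+42)*100+39)*100+24)*100+70)*((j-0)^+7) + ((((7*100+12)*100+87)*100+30)*100+62)*((j-0)^+7*(n-(8*(3*j+2)))^+1) + (((24*100+48)*100+67)*100+86)*((j-0)^+7*(n-(8*(3*j+2)))^+2) + ((22*100+95)*100+54)*((j-0)^+7*(n-(8*(3*j+2)))^+3) + ((((29*100+6)*100+60)*100+24)*100+61)*((j-0)^+8) + ((((2*100+30)*100+59)*100+77)*100+66)*((j-0)^+8*(n-(8*(3*j+2)))^+1) + (((3*100+91)*100+20)*100+57)*((j-0)^+8*(n-(8*(3*j+2)))^+2)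 + ((((8*100+2)*100+65)*100+8)*100+70)*((j-0)^+9) + (((31*100+63)*100+86)*100+0)*((j-0)^+9*(n-(8*(3*j+2)))^+1) + (((93*100+66)*100+4)*100+62)*((j-0)^+10)); last by ring.
pos.
Qed.

Lemma nnA1_1 (j n : rat) : 0 <= j -> 8*(3*j+2) <= n ->
  0 <= (3*j+2)*(n-(3*j+1)) - j*(n-1).
Proof.
move=> hj hn.
have hJ : 0 <= j - 0 by rewrite subr_ge0.
have he : 0 <= n - (8*(3*j+2)) by rewrite subr_ge0.
rewrite -subr_ge0 (_ : (3*j+2)*(n-(3*j+1)) - j*(n-1) - 0 = 30 + 2*((n-(8*(3*j+2)))^+1) + 72*((j-0)^+1) + 2*((j-0)^+1*(n-(8*(3*j+2)))^+1) + 39*((j-0)^+2)); last by ring.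
pos.
Qed.

Lemma nnA1_2 (j n : rat) : 0 <= j -> 8*(3*j+2) <= n ->
  0 <= (3*j+2)*(n-(3*j+1)) - (n-1).
Proof.
move=> hj hn.
have hJ : 0 <= j - 0 by rewrite subr_ge0.
have he : 0 <= n - (8*(3*j+2)) by rewrite subr_ge0.
rewrite -subr_ge0 (_ : (3*j+2)*(n-(3*j+1)) - (n-1) - 0 = 15 + 1*((n-(8*(3*j+2)))^+1) + 63*((j-0)^+1) + 3*((j-0)^+1*(n-(8*(3*j+2)))^+1) + 63*((j-0)^+2)); last by ring.
pos.
Qed.

Lemma polyA2 (j n : rat) : 0 <= j -> 8*(3*j+3) <= n ->
  (3*j+3)^+7 * (n-(3*j+2))^+5 <= ((3*j+3)*(n-(3*j+2)) - j*(n-1))^+3 * ((3*j+3)*(n-(3*j+2))-(n-1))^+3.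
Proof.
move=> hj hn.
have hJ : 0 <= j - 0 by rewrite subr_ge0.
have he : 0 <= n - (8*(3*j+3)) by rewrite subr_ge0.
rewrite -subr_ge0 (_ : ((3*j+3)*(n-(3*j+2)) - j*(n-1))^+3 * ((3*j+3)*(n-(3*j+2))-(n-1))^+3 - (3*j+3)^+7 * (n-(3*j+2))^+5 = (((((1*100+15)*100+86)*100+95)*100+12)*100+88) + ((((37*100+44)*100+88)*100+36)*100+92)*((n-(8*(3*j+3)))^+1) + ((((4*100+92)*100+8)*100+68)*100+26)*((n-(8*(3*j+3)))^+2) + (((33*100+86)*100+3)*100+49)*((n-(8*(3*j+3)))^+3) + (((1*100+29)*100+21)*100+12)*((n-(8*(3*j+3)))^+4) + ((2*100+60)*100+1)*((n-(8*(3*j+3)))^+5) + (2*100+16)*((n-(8*(3*j+3)))^+6) + (((((14*100+48)*100+91)*100+13)*100+63)*100+68)*((j-0)^+1) + (((((4*100+29)*100+40)*100+44)*100+65)*100+16)*((j-0)^+1*(n-(8*(3*j+3)))^+1) + ((((51*100+42)*100+91)*100+50)*100+72)*((j-0)^+1*(n-(8*(3*j+3)))^+2) + ((((3*100+20)*100+1)*100+4)*100+53)*((j-0)^+1*(n-(8*(3*j+3)))^+3) + (((10*100+93)*100+21)*100+38)*((j-0)^+1*(n-(8*(3*j+3)))^+4) + ((19*100+44)*100+27)*((j-0)^+1*(n-(8*(3*j+3)))^+5) + (14*100+4)*((j-0)^+1*(n-(8*(3*j+3)))^+6) + (((((81*100+76)*100+7)*100+67)*100+14)*100+52)*((j-0)^+2)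 + (((((22*100+3)*100+27)*100+0)*100+25)*100+76)*((j-0)^+2*(n-(8*(3*j+3)))^+1) + (((((2*100+37)*100+92)*100+8)*100+37)*100+13)*((j-0)^+2*(n-(8*(3*j+3)))^+2) + ((((13*100+20)*100+17)*100+27)*100+22)*((j-0)^+2*(n-(8*(3*j+3)))^+3) + (((39*100+64)*100+63)*100+77)*((j-0)^+2*(n-(8*(3*j+3)))^+4) + ((60*100+81)*100+84)*((j-0)^+2*(n-(8*(3*j+3)))^+5) + (36*100+90)*((j-0)^+2*(n-(8*(3*j+3)))^+6) + ((((((2*100+75)*100+40)*100+28)*100+52)*100+96)*100+68)*((j-0)^+3) + (((((66*100+78)*100+56)*100+16)*100+32)*100+52)*((j-0)^+3*(n-(8*(3*j+3)))^+1) + (((((6*100+41)*100+56)*100+21)*100+70)*100+91)*((j-0)^+3*(n-(8*(3*j+3)))^+2) + ((((31*100+19)*100+39)*100+85)*100+22)*((j-0)^+3*(n-(8*(3*j+3)))^+3) + (((80*100+44)*100+47)*100+60)*((j-0)^+3*(n-(8*(3*j+3)))^+4) + (((1*100+3)*100+2)*100+60)*((j-0)^+3*(n-(8*(3*j+3)))^+5) + (50*100+5)*((j-0)^+3*(n-(8*(3*j+3)))^+6) + ((((((6*100+16)*100+71)*100+42)*100+16)*100+95)*100+96)*((j-0)^+4) + ((((((1*100+32)*100+85)*100+92)*100+43)*100+76)*100+76)*((j-0)^+4*(n-(8*(3*j+3)))^+1) + (((((11*100+16)*100+35)*100+55)*100+97)*100+56)*((j-0)^+4*(n-(8*(3*j+3)))^+2)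 + ((((46*100+50)*100+19)*100+59)*100+96)*((j-0)^+4*(n-(8*(3*j+3)))^+3) + (((99*100+81)*100+55)*100+8)*((j-0)^+4*(n-(8*(3*j+3)))^+4) + (((1*100+1)*100+97)*100+0)*((j-0)^+4*(n-(8*(3*j+3)))^+5) + (36*100+90)*((j-0)^+4*(n-(8*(3*j+3)))^+6) + ((((((9*100+66)*100+82)*100+67)*100+89)*100+6)*100+23)*((j-0)^+5) + ((((((1*100+82)*100+4)*100+1)*100+87)*100+1)*100+22)*((j-0)^+5*(n-(8*(3*j+3)))^+1) + (((((13*100+9)*100+0)*100+73)*100+95)*100+80)*((j-0)^+5*(n-(8*(3*j+3)))^+2) + ((((45*100+32)*100+45)*100+27)*100+40)*((j-0)^+5*(n-(8*(3*j+3)))^+3) + (((77*100+49)*100+92)*100+61)*((j-0)^+5*(n-(8*(3*j+3)))^+4) + ((58*100+94)*100+10)*((j-0)^+5*(n-(8*(3*j+3)))^+5) + (14*100+4)*((j-0)^+5*(n-(8*(3*j+3)))^+6) + ((((((10*100+87)*100+19)*100+79)*100+99)*100+83)*100+28)*((j-0)^+6) + ((((((1*100+75)*100+15)*100+50)*100+34)*100+75)*100+65)*((j-0)^+6*(n-(8*(3*j+3)))^+1) + (((((10*100+46)*100+58)*100+74)*100+21)*100+16)*((j-0)^+6*(n-(8*(3*j+3)))^+2) + ((((28*100+85)*100+93)*100+35)*100+56)*((j-0)^+6*(n-(8*(3*j+3)))^+3) + (((36*100+74)*100+64)*100+60)*((j-0)^+6*(n-(8*(3*j+3)))^+4) + ((18*100+42)*100+75)*((j-0)^+6*(n-(8*(3*j+3)))^+5)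 + (2*100+16)*((j-0)^+6*(n-(8*(3*j+3)))^+6) + ((((((8*100+82)*100+48)*100+86)*100+69)*100+83)*100+38)*((j-0)^+7) + ((((((1*100+18)*100+20)*100+41)*100+28)*100+81)*100+63)*((j-0)^+7*(n-(8*(3*j+3)))^+1) + (((((5*100+62)*100+72)*100+81)*100+19)*100+94)*((j-0)^+7*(n-(8*(3*j+3)))^+2) + ((((11*100+56)*100+34)*100+56)*100+32)*((j-0)^+7*(n-(8*(3*j+3)))^+3) + (((9*100+72)*100+29)*100+16)*((j-0)^+7*(n-(8*(3*j+3)))^+4) + ((2*100+40)*100+57)*((j-0)^+7*(n-(8*(3*j+3)))^+5) + ((((((5*100+12)*100+26)*100+72)*100+18)*100+23)*100+69)*((j-0)^+8) + (((((54*100+73)*100+87)*100+82)*100+32)*100+41)*((j-0)^+8*(n-(8*(3*j+3)))^+1) + (((((1*100+94)*100+43)*100+18)*100+96)*100+18)*((j-0)^+8*(n-(8*(3*j+3)))^+2) + ((((2*100+64)*100+24)*100+28)*100+17)*((j-0)^+8*(n-(8*(3*j+3)))^+3) + (((1*100+9)*100+86)*100+3)*((j-0)^+8*(n-(8*(3*j+3)))^+4) + ((((((2*100+6)*100+86)*100+22)*100+68)*100+51)*100+8)*((j-0)^+9) + (((((16*100+52)*100+80)*100+35)*100+76)*100+83)*((j-0)^+9*(n-(8*(3*j+3)))^+1) + ((((38*100+90)*100+35)*100+36)*100+98)*((j-0)^+9*(n-(8*(3*j+3)))^+2) + (((26*100+19)*100+80)*100+73)*((j-0)^+9*(n-(8*(3*j+3)))^+3)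 + (((((54*100+96)*100+2)*100+48)*100+44)*100+17)*((j-0)^+10) + (((((2*100+91)*100+91)*100+84)*100+41)*100+78)*((j-0)^+10*(n-(8*(3*j+3)))^+1) + ((((3*100+41)*100+37)*100+53)*100+91)*((j-0)^+10*(n-(8*(3*j+3)))^+2) + (((((8*100+57)*100+95)*100+12)*100+64)*100+52)*((j-0)^+11) + ((((22*100+74)*100+21)*100+31)*100+86)*((j-0)^+11*(n-(8*(3*j+3)))^+1) + ((((59*100+0)*100+60)*100+91)*100+6)*((j-0)^+12)); last by ring.
pos.
Qed.

Lemma nnA2_1 (j n : rat) : 0 <= j -> 8*(3*j+3) <= n ->
  0 <= (3*j+3)*(n-(3*j+2)) - j*(n-1).
Proof.
move=> hj hn.
have hJ : 0 <= j - 0 by rewrite subr_ge0.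
have he : 0 <= n - (8*(3*j+3)) by rewrite subr_ge0.
rewrite -subr_ge0 (_ : (3*j+3)*(n-(3*j+2)) - j*(n-1) - 0 = 66 + 3*((n-(8*(3*j+3)))^+1) + (1*100+6)*((j-0)^+1) + 2*((j-0)^+1*(n-(8*(3*j+3)))^+1) + 39*((j-0)^+2)); last by ring.
pos.
Qed.

Lemma nnA2_2 (j n : rat) : 0 <= j -> 8*(3*j+3) <= n ->
  0 <= (3*j+3)*(n-(3*j+2)) - (n-1).
Proof.
move=> hj hn.
have hJ : 0 <= j - 0 by rewrite subr_ge0.
have he : 0 <= n - (8*(3*j+3)) by rewrite subr_ge0.
rewrite -subr_ge0 (_ : (3*j+3)*(n-(3*j+2)) - (n-1) - 0 = 43 + 2*((n-(8*(3*j+3)))^+1) + (1*100+5)*((j-0)^+1) + 3*((j-0)^+1*(n-(8*(3*j+3)))^+1) + 63*((j-0)^+2)); last by ring.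
pos.
Qed.

Lemma polyB0 (j n : rat) : 1 <= j -> 8*(3*j+1) <= n ->
  (3*j+1)*(3*j+1)*(n-(3*j+0))^+3*(3*j+1-2)^+3 <= ((3*j+1)*(n-(3*j+0))+(3*j+0)*n)*((3*j+1-2)*(n-(3*j+0))-j*n)^+3*((3*j+1-2)*(n-(3*j+0))-n)^+0.
Proof.
move=> hj hn.
have hJ : 0 <= j - 1 by rewrite subr_ge0.
have he : 0 <= n - (8*(3*j+1)) by rewrite subr_ge0.
rewrite -subr_ge0 (_ : ((3*j+1)*(n-(3*j+0))+(3*j+0)*n)*((3*j+1-2)*(n-(3*j+0))-j*n)^+3*((3*j+1-2)*(n-(3*j+0))-n)^+0 - (3*j+1)*(3*j+1)*(n-(3*j+0))^+3*(3*j+1-2)^+3 = ((60*100+43)*100+20) + ((23*100+0)*100+24)*((n-(8*(3*j+1)))^+1) + ((1*100+95)*100+96)*((n-(8*(3*j+1)))^+2) + (6*100+30)*((n-(8*(3*j+1)))^+3) + 7*((n-(8*(3*j+1)))^+4) + (((11*100+83)*100+10)*100+16)*((j-1)^+1) + (((2*100+69)*100+80)*100+8)*((j-1)^+1*(n-(8*(3*j+1)))^+1) + ((18*100+44)*100+10)*((j-1)^+1*(n-(8*(3*j+1)))^+2) + (50*100+28)*((j-1)^+1*(n-(8*(3*j+1)))^+3) + 48*((j-1)^+1*(n-(8*(3*j+1)))^+4) + (((67*100+94)*100+54)*100+4)*((j-1)^+2) + (((11*100+85)*100+13)*100+86)*((j-1)^+2*(n-(8*(3*j+1)))^+1) + ((66*100+88)*100+8)*((j-1)^+2*(n-(8*(3*j+1)))^+2)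 + ((1*100+52)*100+34)*((j-1)^+2*(n-(8*(3*j+1)))^+3) + (1*100+20)*((j-1)^+2*(n-(8*(3*j+1)))^+4) + ((((1*100+88)*100+26)*100+82)*100+42)*((j-1)^+3) + (((26*100+29)*100+76)*100+68)*((j-1)^+3*(n-(8*(3*j+1)))^+1) + (((1*100+20)*100+47)*100+34)*((j-1)^+3*(n-(8*(3*j+1)))^+2) + ((2*100+17)*100+60)*((j-1)^+3*(n-(8*(3*j+1)))^+3) + (1*100+28)*((j-1)^+3*(n-(8*(3*j+1)))^+4) + ((((2*100+94)*100+0)*100+97)*100+83)*((j-1)^+4) + (((32*100+47)*100+27)*100+26)*((j-1)^+4*(n-(8*(3*j+1)))^+1) + (((1*100+14)*100+15)*100+6)*((j-1)^+4*(n-(8*(3*j+1)))^+2) + ((1*100+45)*100+38)*((j-1)^+4*(n-(8*(3*j+1)))^+3) + 48*((j-1)^+4*(n-(8*(3*j+1)))^+4) + ((((2*100+73)*100+26)*100+63)*100+79)*((j-1)^+5) + (((22*100+64)*100+13)*100+63)*((j-1)^+5*(n-(8*(3*j+1)))^+1) + ((54*100+37)*100+53)*((j-1)^+5*(n-(8*(3*j+1)))^+2) + (36*100+45)*((j-1)^+5*(n-(8*(3*j+1)))^+3) + ((((1*100+50)*100+29)*100+72)*100+55)*((j-1)^+6) + (((8*100+34)*100+74)*100+82)*((j-1)^+6*(n-(8*(3*j+1)))^+1) + ((10*100+26)*100+27)*((j-1)^+6*(n-(8*(3*j+1)))^+2) + (((45*100+25)*100+23)*100+51)*((j-1)^+7)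 + (((1*100+26)*100+64)*100+35)*((j-1)^+7*(n-(8*(3*j+1)))^+1) + (((5*100+75)*100+76)*100+42)*((j-1)^+8)); last by ring.
pos.
Qed.

Lemma nnB0_1 (j n : rat) : 1 <= j -> 8*(3*j+1) <= n ->
  0 <= (3*j+1-2)*(n-(3*j+0))-j*n.
Proof.
move=> hj hn.
have hJ : 0 <= j - 1 by rewrite subr_ge0.
have he : 0 <= n - (8*(3*j+1)) by rewrite subr_ge0.
rewrite -subr_ge0 (_ : (3*j+1-2)*(n-(3*j+0))-j*n - 0 = 26 + 1*((n-(8*(3*j+1)))^+1) + 73*((j-1)^+1) + 2*((j-1)^+1*(n-(8*(3*j+1)))^+1) + 39*((j-1)^+2)); last by ring.
pos.
Qed.

Lemma nnB0_2 (j n : rat) : 1 <= j -> 8*(3*j+1) <= n ->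
  0 <= (3*j+1-2)*(n-(3*j+0))-n.
Proof.
move=> hj hn.
have hJ : 0 <= j - 1 by rewrite subr_ge0.
have he : 0 <= n - (8*(3*j+1)) by rewrite subr_ge0.
rewrite -subr_ge0 (_ : (3*j+1-2)*(n-(3*j+0))-n - 0 = 26 + 1*((n-(8*(3*j+1)))^+1) + (1*100+5)*((j-1)^+1) + 3*((j-1)^+1*(n-(8*(3*j+1)))^+1) + 63*((j-1)^+2)); last by ring.
pos.
Qed.

Lemma polyB1 (j n : rat) : 1 <= j -> 8*(3*j+2) <= n ->
  (3*j+2)*(3*j+2)*(n-(3*j+1))^+4*(3*j+2-2)^+4 <= ((3*j+2)*(n-(3*j+1))+(3*j+1)*n)*((3*j+2-2)*(n-(3*j+1))-j*n)^+3*((3*j+2-2)*(n-(3*j+1))-n)^+1.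
Proof.
move=> hj hn.
have hJ : 0 <= j - 1 by rewrite subr_ge0.
have he : 0 <= n - (8*(3*j+2)) by rewrite subr_ge0.
rewrite -subr_ge0 (_ : ((3*j+2)*(n-(3*j+1))+(3*j+1)*n)*((3*j+2-2)*(n-(3*j+1))-j*n)^+3*((3*j+2-2)*(n-(3*j+1))-n)^+1 - (3*j+2)*(3*j+2)*(n-(3*j+1))^+4*(3*j+2-2)^+4 = ((((38*100+68)*100+44)*100+54)*100+40) + ((((6*100+69)*100+77)*100+38)*100+24)*((n-(8*(3*j+2)))^+1) + (((44*100+62)*100+45)*100+44)*((n-(8*(3*j+2)))^+2) + (((1*100+44)*100+70)*100+24)*((n-(8*(3*j+2)))^+3) + ((2*100+29)*100+99)*((n-(8*(3*j+2)))^+4) + (1*100+44)*((n-(8*(3*j+2)))^+5) + (((((3*100+35)*100+82)*100+48)*100+80)*100+64)*((j-1)^+1) + ((((52*100+82)*100+9)*100+41)*100+44)*((j-1)^+1*(n-(8*(3*j+2)))^+1) + ((((3*100+19)*100+51)*100+46)*100+40)*((j-1)^+1*(n-(8*(3*j+2)))^+2) + (((9*100+36)*100+71)*100+16)*((j-1)^+1*(n-(8*(3*j+2)))^+3) + ((13*100+36)*100+62)*((j-1)^+1*(n-(8*(3*j+2)))^+4) + (7*100+44)*((j-1)^+1*(n-(8*(3*j+2)))^+5) + (((((12*100+72)*100+73)*100+38)*100+96)*100+0)*((j-1)^+2) + (((((1*100+80)*100+24)*100+42)*100+1)*100+44)*((j-1)^+2*(n-(8*(3*j+2)))^+1) + ((((9*100+76)*100+31)*100+67)*100+78)*((j-1)^+2*(n-(8*(3*j+2)))^+2)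 + (((25*100+38)*100+60)*100+96)*((j-1)^+2*(n-(8*(3*j+2)))^+3) + ((31*100+68)*100+21)*((j-1)^+2*(n-(8*(3*j+2)))^+4) + (15*100+12)*((j-1)^+2*(n-(8*(3*j+2)))^+5) + (((((27*100+87)*100+68)*100+68)*100+37)*100+92)*((j-1)^+3) + (((((3*100+50)*100+59)*100+35)*100+3)*100+64)*((j-1)^+3*(n-(8*(3*j+2)))^+1) + ((((16*100+67)*100+30)*100+38)*100+80)*((j-1)^+3*(n-(8*(3*j+2)))^+2) + (((37*100+40)*100+49)*100+58)*((j-1)^+3*(n-(8*(3*j+2)))^+3) + ((39*100+24)*100+40)*((j-1)^+3*(n-(8*(3*j+2)))^+4) + (15*100+12)*((j-1)^+3*(n-(8*(3*j+2)))^+5) + (((((39*100+22)*100+28)*100+77)*100+8)*100+27)*((j-1)^+4) + (((((4*100+29)*100+53)*100+71)*100+13)*100+37)*((j-1)^+4*(n-(8*(3*j+2)))^+1) + ((((17*100+43)*100+94)*100+26)*100+87)*((j-1)^+4*(n-(8*(3*j+2)))^+2) + (((32*100+40)*100+16)*100+14)*((j-1)^+4*(n-(8*(3*j+2)))^+3) + ((26*100+80)*100+29)*((j-1)^+4*(n-(8*(3*j+2)))^+4) + (7*100+44)*((j-1)^+4*(n-(8*(3*j+2)))^+5) + (((((37*100+14)*100+29)*100+93)*100+60)*100+19)*((j-1)^+5) + (((((3*100+44)*100+46)*100+84)*100+84)*100+45)*((j-1)^+5*(n-(8*(3*j+2)))^+1) + ((((11*100+45)*100+83)*100+31)*100+91)*((j-1)^+5*(n-(8*(3*j+2)))^+2)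 + (((16*100+51)*100+68)*100+18)*((j-1)^+5*(n-(8*(3*j+2)))^+3) + ((9*100+57)*100+6)*((j-1)^+5*(n-(8*(3*j+2)))^+4) + (1*100+44)*((j-1)^+5*(n-(8*(3*j+2)))^+5) + (((((24*100+2)*100+51)*100+77)*100+14)*100+12)*((j-1)^+6) + (((((1*100+81)*100+12)*100+84)*100+70)*100+76)*((j-1)^+6*(n-(8*(3*j+2)))^+1) + ((((4*100+62)*100+45)*100+7)*100+89)*((j-1)^+6*(n-(8*(3*j+2)))^+2) + (((4*100+59)*100+16)*100+74)*((j-1)^+6*(n-(8*(3*j+2)))^+3) + ((1*100+39)*100+59)*((j-1)^+6*(n-(8*(3*j+2)))^+4) + (((((10*100+49)*100+91)*100+43)*100+26)*100+6)*((j-1)^+7) + ((((60*100+30)*100+35)*100+31)*100+24)*((j-1)^+7*(n-(8*(3*j+2)))^+1) + ((((1*100+4)*100+94)*100+78)*100+93)*((j-1)^+7*(n-(8*(3*j+2)))^+2) + ((53*100+75)*100+16)*((j-1)^+7*(n-(8*(3*j+2)))^+3) + (((((2*100+97)*100+8)*100+44)*100+34)*100+67)*((j-1)^+8) + ((((11*100+54)*100+95)*100+20)*100+27)*((j-1)^+8*(n-(8*(3*j+2)))^+1) + (((10*100+26)*100+48)*100+6)*((j-1)^+8*(n-(8*(3*j+2)))^+2) + ((((49*100+21)*100+1)*100+17)*100+11)*((j-1)^+9) + (((97*100+5)*100+83)*100+31)*((j-1)^+9*(n-(8*(3*j+2)))^+1) + ((((3*100+62)*100+73)*100+14)*100+46)*((j-1)^+10));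 last by ring.
pos.
Qed.

Lemma nnB1_1 (j n : rat) : 1 <= j -> 8*(3*j+2) <= n ->
  0 <= (3*j+2-2)*(n-(3*j+1))-j*n.
Proof.
move=> hj hn.
have hJ : 0 <= j - 1 by rewrite subr_ge0.
have he : 0 <= n - (8*(3*j+2)) by rewrite subr_ge0.
rewrite -subr_ge0 (_ : (3*j+2-2)*(n-(3*j+1))-j*n - 0 = 68 + 2*((n-(8*(3*j+2)))^+1) + (1*100+7)*((j-1)^+1) + 2*((j-1)^+1*(n-(8*(3*j+2)))^+1) + 39*((j-1)^+2)); last by ring.
pos.
Qed.

Lemma nnB1_2 (j n : rat) : 1 <= j -> 8*(3*j+2) <= n ->
  0 <= (3*j+2-2)*(n-(3*j+1))-n.
Proof.
move=> hj hn.
have hJ : 0 <= j - 1 by rewrite subr_ge0.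
have he : 0 <= n - (8*(3*j+2)) by rewrite subr_ge0.
rewrite -subr_ge0 (_ : (3*j+2-2)*(n-(3*j+1))-n - 0 = 68 + 2*((n-(8*(3*j+2)))^+1) + (1*100+47)*((j-1)^+1) + 3*((j-1)^+1*(n-(8*(3*j+2)))^+1) + 63*((j-1)^+2)); last by ring.
pos.
Qed.

Lemma polyB2 (j n : rat) : 1 <= j -> 8*(3*j+3) <= n ->
  (3*j+3)*(3*j+3)*(n-(3*j+2))^+5*(3*j+3-2)^+5 <= ((3*j+3)*(n-(3*j+2))+(3*j+2)*n)*((3*j+3-2)*(n-(3*j+2))-j*n)^+3*((3*j+3-2)*(n-(3*j+2))-n)^+2.
Proof.
move=> hj hn.
have hJ : 0 <= j - 1 by rewrite subr_ge0.
have he : 0 <= n - (8*(3*j+3)) by rewrite subr_ge0.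
rewrite -subr_ge0 (_ : ((3*j+3)*(n-(3*j+2))+(3*j+2)*n)*((3*j+3-2)*(n-(3*j+2))-j*n)^+3*((3*j+3-2)*(n-(3*j+2))-n)^+2 - (3*j+3)*(3*j+3)*(n-(3*j+2))^+5*(3*j+3-2)^+5 = ((((((9*100+18)*100+1)*100+73)*100+56)*100+80)*100+0) + ((((((1*100+45)*100+83)*100+93)*100+3)*100+52)*100+64)*((n-(8*(3*j+3)))^+1) + (((((9*100+51)*100+54)*100+95)*100+42)*100+40)*((n-(8*(3*j+3)))^+2) + ((((32*100+73)*100+39)*100+93)*100+60)*((n-(8*(3*j+3)))^+3) + (((62*100+75)*100+5)*100+20)*((n-(8*(3*j+3)))^+4) + ((63*100+65)*100+70)*((n-(8*(3*j+3)))^+5) + (26*100+73)*((n-(8*(3*j+3)))^+6) + ((((((70*100+54)*100+81)*100+60)*100+30)*100+77)*100+12)*((j-1)^+1) + ((((((10*100+41)*100+47)*100+56)*100+81)*100+53)*100+60)*((j-1)^+1*(n-(8*(3*j+3)))^+1) + (((((62*100+89)*100+7)*100+84)*100+16)*100+0)*((j-1)^+1*(n-(8*(3*j+3)))^+2) + (((((1*100+99)*100+20)*100+61)*100+87)*100+20)*((j-1)^+1*(n-(8*(3*j+3)))^+3) + ((((3*100+49)*100+39)*100+35)*100+90)*((j-1)^+1*(n-(8*(3*j+3)))^+4) + (((3*100+21)*100+78)*100+24)*((j-1)^+1*(n-(8*(3*j+3)))^+5) + ((1*100+21)*100+50)*((j-1)^+1*(n-(8*(3*j+3)))^+6) + (((((((2*100+45)*100+27)*100+57)*100+79)*100+21)*100+17)*100+76)*((j-1)^+2)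 + ((((((33*100+37)*100+65)*100+46)*100+43)*100+88)*100+48)*((j-1)^+2*(n-(8*(3*j+3)))^+1) + ((((((1*100+84)*100+66)*100+99)*100+92)*100+7)*100+20)*((j-1)^+2*(n-(8*(3*j+3)))^+2) + (((((5*100+31)*100+90)*100+12)*100+71)*100+40)*((j-1)^+2*(n-(8*(3*j+3)))^+3) + ((((8*100+40)*100+23)*100+56)*100+35)*((j-1)^+2*(n-(8*(3*j+3)))^+4) + (((6*100+88)*100+48)*100+2)*((j-1)^+2*(n-(8*(3*j+3)))^+5) + ((2*100+27)*100+61)*((j-1)^+2*(n-(8*(3*j+3)))^+6) + (((((((5*100+10)*100+80)*100+13)*100+66)*100+95)*100+2)*100+8)*((j-1)^+3) + ((((((63*100+43)*100+19)*100+2)*100+48)*100+40)*100+64)*((j-1)^+3*(n-(8*(3*j+3)))^+1) + ((((((3*100+17)*100+55)*100+45)*100+65)*100+85)*100+72)*((j-1)^+3*(n-(8*(3*j+3)))^+2) + (((((8*100+18)*100+52)*100+1)*100+28)*100+16)*((j-1)^+3*(n-(8*(3*j+3)))^+3) + ((((11*100+40)*100+58)*100+23)*100+58)*((j-1)^+3*(n-(8*(3*j+3)))^+4) + (((8*100+8)*100+56)*100+60)*((j-1)^+3*(n-(8*(3*j+3)))^+5) + ((2*100+25)*100+0)*((j-1)^+3*(n-(8*(3*j+3)))^+6) + (((((((7*100+10)*100+46)*100+31)*100+73)*100+59)*100+30)*100+32)*((j-1)^+4) + ((((((79*100+51)*100+13)*100+75)*100+37)*100+28)*100+50)*((j-1)^+4*(n-(8*(3*j+3)))^+1)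 + ((((((3*100+54)*100+44)*100+12)*100+24)*100+83)*100+59)*((j-1)^+4*(n-(8*(3*j+3)))^+2) + (((((8*100+0)*100+61)*100+81)*100+97)*100+62)*((j-1)^+4*(n-(8*(3*j+3)))^+3) + ((((9*100+56)*100+49)*100+10)*100+41)*((j-1)^+4*(n-(8*(3*j+3)))^+4) + (((5*100+63)*100+19)*100+72)*((j-1)^+4*(n-(8*(3*j+3)))^+5) + ((1*100+23)*100+84)*((j-1)^+4*(n-(8*(3*j+3)))^+6) + (((((((6*100+95)*100+92)*100+78)*100+9)*100+81)*100+47)*100+78)*((j-1)^+5) + ((((((69*100+8)*100+22)*100+77)*100+63)*100+24)*100+52)*((j-1)^+5*(n-(8*(3*j+3)))^+1) + ((((((2*100+68)*100+52)*100+69)*100+7)*100+32)*100+40)*((j-1)^+5*(n-(8*(3*j+3)))^+2) + (((((5*100+16)*100+55)*100+77)*100+80)*100+82)*((j-1)^+5*(n-(8*(3*j+3)))^+3) + ((((5*100+7)*100+71)*100+82)*100+42)*((j-1)^+5*(n-(8*(3*j+3)))^+4) + (((2*100+32)*100+76)*100+88)*((j-1)^+5*(n-(8*(3*j+3)))^+5) + (36*100+0)*((j-1)^+5*(n-(8*(3*j+3)))^+6) + (((((((4*100+92)*100+67)*100+44)*100+74)*100+52)*100+85)*100+5)*((j-1)^+6) + ((((((42*100+48)*100+34)*100+63)*100+93)*100+47)*100+24)*((j-1)^+6*(n-(8*(3*j+3)))^+1) + ((((((1*100+39)*100+94)*100+19)*100+31)*100+63)*100+23)*((j-1)^+6*(n-(8*(3*j+3)))^+2)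 + (((((2*100+19)*100+98)*100+27)*100+42)*100+46)*((j-1)^+6*(n-(8*(3*j+3)))^+3) + ((((1*100+66)*100+68)*100+34)*100+74)*((j-1)^+6*(n-(8*(3*j+3)))^+4) + ((52*100+87)*100+68)*((j-1)^+6*(n-(8*(3*j+3)))^+5) + (4*100+32)*((j-1)^+6*(n-(8*(3*j+3)))^+6) + (((((((2*100+54)*100+16)*100+34)*100+33)*100+13)*100+45)*100+55)*((j-1)^+7) + ((((((18*100+50)*100+44)*100+62)*100+64)*100+56)*100+39)*((j-1)^+7*(n-(8*(3*j+3)))^+1) + (((((49*100+56)*100+81)*100+44)*100+54)*100+58)*((j-1)^+7*(n-(8*(3*j+3)))^+2) + ((((59*100+66)*100+14)*100+66)*100+92)*((j-1)^+7*(n-(8*(3*j+3)))^+3) + (((30*100+95)*100+94)*100+15)*((j-1)^+7*(n-(8*(3*j+3)))^+4) + ((5*100+9)*100+49)*((j-1)^+7*(n-(8*(3*j+3)))^+5) + ((((((94*100+88)*100+75)*100+69)*100+8)*100+71)*100+72)*((j-1)^+8) + ((((((5*100+59)*100+77)*100+92)*100+79)*100+41)*100+34)*((j-1)^+8*(n-(8*(3*j+3)))^+1) + (((((11*100+42)*100+67)*100+55)*100+43)*100+7)*((j-1)^+8*(n-(8*(3*j+3)))^+2) + ((((9*100+35)*100+55)*100+19)*100+44)*((j-1)^+8*(n-(8*(3*j+3)))^+3) + (((2*100+49)*100+19)*100+65)*((j-1)^+8*(n-(8*(3*j+3)))^+4) + ((((((25*100+1)*100+45)*100+72)*100+22)*100+29)*100+76)*((j-1)^+9)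 + ((((((1*100+12)*100+6)*100+70)*100+63)*100+91)*100+90)*((j-1)^+9*(n-(8*(3*j+3)))^+1) + (((((1*100+54)*100+88)*100+73)*100+20)*100+34)*((j-1)^+9*(n-(8*(3*j+3)))^+2) + (((64*100+65)*100+79)*100+26)*((j-1)^+9*(n-(8*(3*j+3)))^+3) + ((((((4*100+42)*100+21)*100+89)*100+16)*100+93)*100+77)*((j-1)^+10) + (((((13*100+36)*100+91)*100+84)*100+36)*100+28)*((j-1)^+10*(n-(8*(3*j+3)))^+1) + ((((9*100+37)*100+85)*100+77)*100+71)*((j-1)^+10*(n-(8*(3*j+3)))^+2) + (((((47*100+9)*100+10)*100+33)*100+59)*100+31)*((j-1)^+11) + ((((72*100+2)*100+86)*100+91)*100+91)*((j-1)^+11*(n-(8*(3*j+3)))^+1) + (((((2*100+28)*100+52)*100+8)*100+10)*100+98)*((j-1)^+12)); last by ring.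
pos.
Qed.

Lemma nnB2_1 (j n : rat) : 1 <= j -> 8*(3*j+3) <= n ->
  0 <= (3*j+3-2)*(n-(3*j+2))-j*n.
Proof.
move=> hj hn.
have hJ : 0 <= j - 1 by rewrite subr_ge0.
have he : 0 <= n - (8*(3*j+3)) by rewrite subr_ge0.
rewrite -subr_ge0 (_ : (3*j+3-2)*(n-(3*j+2))-j*n - 0 = (1*100+24) + 3*((n-(8*(3*j+3)))^+1) + (1*100+41)*((j-1)^+1) + 2*((j-1)^+1*(n-(8*(3*j+3)))^+1) + 39*((j-1)^+2)); last by ring.
pos.
Qed.

Lemma nnB2_2 (j n : rat) : 1 <= j -> 8*(3*j+3) <= n ->
  0 <= (3*j+3-2)*(n-(3*j+2))-n.
Proof.
move=> hj hn.
have hJ : 0 <= j - 1 by rewrite subr_ge0.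
have he : 0 <= n - (8*(3*j+3)) by rewrite subr_ge0.
rewrite -subr_ge0 (_ : (3*j+3-2)*(n-(3*j+2))-n - 0 = (1*100+24) + 3*((n-(8*(3*j+3)))^+1) + (1*100+89)*((j-1)^+1) + 3*((j-1)^+1*(n-(8*(3*j+3)))^+1) + 63*((j-1)^+2)); last by ring.
pos.
Qed.

Lemma polyB3 (n : rat) : 24 <= n ->
  3*3*(n-2)^+5*2^+5 <= (3*(n-2)+2*n)*(2*(n-2)-0*n)^+3*(2*(n-2)-n)^+2.
Proof.
move=> hn.
have he : 0 <= n - 24 by rewrite subr_ge0.
rewrite -subr_ge0 (_ : (3*(n-2)+2*n)*(2*(n-2)-0*n)^+3*(2*(n-2)-n)^+2 - 3*3*(n-2)^+5*2^+5 = ((((24*100+0)*100+14)*100+43)*100+84) + ((((7*100+51)*100+16)*100+80)*100+0)*((n-24)^+1) + (((96*100+35)*100+92)*100+96)*((n-24)^+2) + (((6*100+50)*100+79)*100+4)*((n-24)^+3) + ((24*100+46)*100+72)*((n-24)^+4) + (48*100+64)*((n-24)^+5) + 40*((n-24)^+6)); last by ring.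
pos.
Qed.

Lemma nnB3_1 (n : rat) : 24 <= n ->
  0 <= 2*(n-2)-0*n.
Proof.
move=> hn.
have he : 0 <= n - 24 by rewrite subr_ge0.
rewrite -subr_ge0 (_ : 2*(n-2)-0*n - 0 = 44 + 2*((n-24)^+1)); last by ring.
pos.
Qed.

Lemma nnB3_2 (n : rat) : 24 <= n ->
  0 <= 2*(n-2)-n.
Proof.
move=> hn.
have he : 0 <= n - 24 by rewrite subr_ge0.
rewrite -subr_ge0 (_ : 2*(n-2)-n - 0 = 20 + 1*((n-24)^+1)); last by ring.
pos.
Qed.

From mathcomp Require Import zify.
Lemma frac_le (a b c d : rat) : 0 < b -> 0 < d -> a * d <= c * b -> a / b <= c / d.
Proof. move=> b0 d0 h. by rewrite ler_pdivlMr // mulrAC ler_pdivrMr. Qed.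

Lemma pmf_ge0 n i k j : 0 <= hyp_pmf n i k j.
Proof. by rewrite /hyp_pmf; apply: divr_ge0; apply: ler0n. Qed.

Lemma tail1 n i k (x : rat) : x <= k%:R -> hyp_pmf n i k k <= hyp_tail n i k x.
Proof.
move=> hx; rewrite /hyp_tail big_mkcond big_nat_recr //= hx lerDr.
by apply: sumr_ge0 => j _; case: ifP => // _; apply: pmf_ge0.
Qed.

Lemma tail2 n i m (x : rat) : x <= m%:R -> hyp_pmf n i m.+1 m.+1 + hyp_pmf n i m.+1 m <= hyp_tail n i m.+1 x.
Proof.
move=> hx; have hx' : x <= m.+1%:R by apply: le_trans hx _; rewrite ler_nat.
rewrite /hyp_tail big_mkcond big_nat_recr //= big_nat_recr //= hx hx'.
have S0 : 0 <= \sum_(0 <= j < m) (if x <= j%:R then hyp_pmf n i m.+1 j else 0).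
  by apply: sumr_ge0 => j _; case: ifP => // _; apply: pmf_ge0.
lra.
Qed.

Lemma finish (i N m j r : nat) (K W Dr a : rat) : m = (j*3 + r)%N -> 0 < Dr -> 0 <= W -> W <= Dr -> 0 <= a ->
  (forall t, (t < m)%N -> (Dr - W)/Dr * (N - t)%:R <= (i - t)%:R) ->
  0 <= Dr - j%:R * W -> K * Dr^+(3+r) <= (Dr - j%:R*W)^+3 * (Dr-W)^+r * a ->
  K * 'C(N,m)%:R <= 'C(i,m)%:R * a.
Proof.
move=> hm D0 W0 WD a0 ht jn FI.
set c := (Dr - W)/Dr.
have c0 : 0 <= c by apply: divr_ge0; lra.
have hb := @bin_lb i N m c c0 ht.
have hc : c^+m = (c^+j)^+3 * c^+r by rewrite hm exprD exprM.
have Dn : Dr != 0 by rewrite gt_eqF.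
have hbern : (Dr - j%:R * W)/Dr <= c^+j.
  have := @bernoulli c j c0.
  by rewrite (_ : 1 - j%:R * (1 - c) = (Dr - j%:R * W)/Dr) // /c; field.
have h3 : ((Dr - j%:R * W)/Dr)^+3 <= (c^+j)^+3 by apply: powle => //; apply: divr_ge0 => //; lra.
have hK : K <= ((Dr - j%:R * W)/Dr)^+3 * c^+r * a.
  have E : ((Dr - j%:R * W)/Dr)^+3 * c^+r * a = ((Dr - j%:R * W)^+3 * (Dr - W)^+r * a) / Dr^+(3+r).
    by rewrite /c !expr_div_n exprD; field; rewrite ?expf_neq0.
  by rewrite E ler_pdivlMr ?exprn_gt0.
apply: (le_trans (ler_wpM2r (ler0n _ _) hK)).
apply: (@le_trans _ _ ((c^+m * 'C(N,m)%:R) * a)); last by apply: ler_wpM2r.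
rewrite hc (_ : (c ^+ j) ^+ 3 * c ^+ r * 'C(N, m)%:R * a = ((c ^+ j) ^+ 3 * c ^+ r * a) * 'C(N,m)%:R); last by ring.
apply: ler_wpM2r; first exact: ler0n.
apply: ler_wpM2r => //.
by apply: ler_wpM2r => //; apply: exprn_ge0.
Qed.

Lemma common (n i m : nat) : (0 < n)%N -> (m < i)%N -> (i <= n)%N ->
  [/\ ((n - m)%:R - (n - i)%:R : rat) = (i - m)%:R,
      0 < ((n - m)%:R : rat), 0 <= ((n - i)%:R : rat), ((n - i)%:R : rat) <= (n - m)%:R &
      forall t, (t < m)%N -> ((n - m)%:R - (n - i)%:R)/(n - m)%:R * (n.-1 - t)%:R <= ((i - t)%:R : rat)].
Proof.
move=> n0 mi iN.
have hDW : ((n - m)%:R - (n - i)%:R : rat) = (i - m)%:R by rewrite -natrB; [congr (_%:R); lia | lia].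
split; [exact: hDW | by rewrite ltr0n; lia | exact: ler0n | by rewrite ler_nat; lia | ].
move=> t ht; rewrite hDW mulrAC ler_pdivrMr; last by rewrite ltr0n; lia.
by rewrite -!natrM ler_nat; apply: nat_ineq.
Qed.



Lemma coreA (n i m : nat) : (0 < n)%N -> (8 * m.+1 <= n)%N -> (i <= n)%N -> (m < i)%N ->
  (m.+1 * (n - i) < n)%N ->
  m.+1%:R * 'C(n.-1, m)%:R <= 'C(i, m)%:R * (i - m)%:R :> rat.
Proof.
move=> n0 h8 iN mi hA.
have [hDW D0 W0 WD ht] := @common n i m n0 mi iN.
have hm := div.divn_eq m 3.
have r3 : (m %% 3 < 3)%N by apply: ltn_pmod.
set j := (m %/ 3)%N in hm; set r := (m %% 3)%N in hm r3.
set J : rat := j%:R.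
have hJ0 : 0 <= J by apply: ler0n.
set W : rat := (n - i)%:R.
set Nn : rat := n%:R.
have hA' : m.+1%:R * W + 1 <= Nn by rewrite /W /Nn -natrM natr1 ler_nat.
have h8' : 8 * m.+1%:R <= Nn by rewrite /Nn -natrM ler_nat.
have hDr : ((n - m)%:R : rat) = Nn - m%:R by rewrite natrB //; lia.
have hIM : ((i - m)%:R : rat) = (n-m)%:R - W by rewrite hDW.
rewrite natrB; last by lia.
rewrite -!natrB ?hIM; try lia.
have [e|[e|e]] : r = 0%N \/ r = 1%N \/ r = 2%N by lia.
- rewrite e in hm.
  have hK : (m.+1%:R : rat) = 3*J+1 by rewrite hm -addn1 !natrD natrM /J; ring.
  have hM : (m%:R : rat) = 3*J+0 by rewrite hm !natrD natrM /J; ring.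
  rewrite hK in hA' h8'.
  have kpos : 0 < 3*J+1 by lra.
  have [nn FI] := bridgeA0 (3*J+1) Nn J W (Nn - (3*J+0)) kpos hJ0 W0 hA' (nnA0_1 J Nn hJ0 h8') (nnA0_2 J Nn hJ0 h8') (polyA0 J Nn hJ0 h8').
  apply: (@finish _ _ _ j 0 _ _ _ _ hm D0 W0 WD) => //; first by lra.
  + by rewrite hDr hM; exact: nn.
  + by rewrite hDr hM hK; exact: FI.
- rewrite e in hm.
  have hK : (m.+1%:R : rat) = 3*J+2 by rewrite hm -addn1 !natrD natrM /J; ring.
  have hM : (m%:R : rat) = 3*J+1 by rewrite hm !natrD natrM /J; ring.
  rewrite hK in hA' h8'.
  have kpos : 0 < 3*J+2 by lra.
  have [nn FI] := bridgeA1 (3*J+2) Nn J W (Nn - (3*J+1)) kpos hJ0 W0 hA' (nnA1_1 J Nn hJ0 h8') (nnA1_2 J Nn hJ0 h8') (polyA1 J Nn hJ0 h8').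
  apply: (@finish _ _ _ j 1 _ _ _ _ hm D0 W0 WD) => //; first by lra.
  + by rewrite hDr hM; exact: nn.
  + by rewrite hDr hM hK; exact: FI.
- rewrite e in hm.
  have hK : (m.+1%:R : rat) = 3*J+3 by rewrite hm -addn1 !natrD natrM /J; ring.
  have hM : (m%:R : rat) = 3*J+2 by rewrite hm !natrD natrM /J; ring.
  rewrite hK in hA' h8'.
  have kpos : 0 < 3*J+3 by lra.
  have [nn FI] := bridgeA2 (3*J+3) Nn J W (Nn - (3*J+2)) kpos hJ0 W0 hA' (nnA2_1 J Nn hJ0 h8') (nnA2_2 J Nn hJ0 h8') (polyA2 J Nn hJ0 h8').
  apply: (@finish _ _ _ j 2 _ _ _ _ hm D0 W0 WD) => //; first by lra.
  + by rewrite hDr hM; exact: nn.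
  + by rewrite hDr hM hK; exact: FI.
Qed.

Lemma coreB (n i m : nat) : (0 < n)%N -> (8 * m.+1 <= n)%N -> (i <= n)%N -> (m < i)%N ->
  (n <= m.+1 * (n - i))%N -> (2 * (n - i) < n)%N -> ((m - 1) * (n - i) <= n)%N ->
  m.+1%:R * 'C(n.-1, m)%:R <= 'C(i, m)%:R * ((i - m)%:R + m.+1%:R * (n - i)%:R) :> rat.
Proof.
move=> n0 h8 iN mi hB h2 hden.
have m2 : (2 <= m)%N by nia.
have [hDW D0 W0 WD ht] := @common n i m n0 mi iN.
have D0' := D0.
have hm := div.divn_eq m 3.
have r3 : (m %% 3 < 3)%N by apply: ltn_pmod.
set j := (m %/ 3)%N in hm; set r := (m %% 3)%N in hm r3.
set J : rat := j%:R.
have hJ0 : 0 <= J by apply: ler0n.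
set W : rat := (n - i)%:R.
set Nn : rat := n%:R.
have hB' : Nn <= m.+1%:R * W by rewrite /W /Nn -natrM ler_nat.
have h2' : 2 * W <= Nn by rewrite /W /Nn -natrM ler_nat; lia.
have hd0 : (m%:R - 1) * W <= Nn.
  have := hden; rewrite -(ler_nat rat) natrM natrB //; lia.
have h8' : 8 * m.+1%:R <= Nn by rewrite /Nn -natrM ler_nat.
have hDr : ((n - m)%:R : rat) = Nn - m%:R by rewrite natrB //; lia.
have hIM : ((i - m)%:R : rat) = (n-m)%:R - W by rewrite hDW.
rewrite natrB; last by lia.
rewrite -!natrB ?hIM; try lia.
have [e|[e|[e|e]]] : (r = 0 /\ 1 <= j \/ r = 1 /\ 1 <= j \/ r = 2 /\ 1 <= j \/ r = 2 /\ j = 0)%N by lia.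
- case: e => e ej; rewrite e in hm.
  have hK : (m.+1%:R : rat) = 3*J+1 by rewrite hm -addn1 !natrD natrM /J; ring.
  have hM : (m%:R : rat) = 3*J+0 by rewrite hm !natrD natrM /J; ring.
  have hJ1 : 1 <= J by rewrite /J ler1n.
  rewrite hK in hB' h8'. rewrite hDr hM in D0.
  have hd : (3*J+1-2) * W <= Nn by rewrite (_ : 3*J+1-2 = m%:R - 1); [exact: hd0 | rewrite hM; ring].
  have kpos : 0 < 3*J+1 by lra.
  have dpos : 0 < 3*J+1-2 by lra.
  have [nn FI] := bridgeB0 (3*J+1) (3*J+0) (3*J+1-2) Nn J W (Nn - (3*J+0)) kpos dpos hJ0 (ltac:(lra)) W0 (ltW D0) (ltac:(lra)) hB' hd (ltac:(ring)) (nnB0_1 J Nn hJ1 h8') (nnB0_2 J Nn hJ1 h8') (polyB0 J Nn hJ1 h8').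
  apply: (@finish _ _ _ j 0 _ _ _ _ hm D0' W0 WD) => //; first by apply: addr_ge0; [lra | apply: mulr_ge0; [apply: ler0n | exact: W0]].
  + by rewrite hDr hM; exact: nn.
  + by rewrite hDr hM hK; exact: FI.
- case: e => e ej; rewrite e in hm.
  have hK : (m.+1%:R : rat) = 3*J+2 by rewrite hm -addn1 !natrD natrM /J; ring.
  have hM : (m%:R : rat) = 3*J+1 by rewrite hm !natrD natrM /J; ring.
  have hJ1 : 1 <= J by rewrite /J ler1n.
  rewrite hK in hB' h8'. rewrite hDr hM in D0.
  have hd : (3*J+2-2) * W <= Nn by rewrite (_ : 3*J+2-2 = m%:R - 1); [exact: hd0 | rewrite hM; ring].
  have kpos : 0 < 3*J+2 by lra.
  have dpos : 0 < 3*J+2-2 by lra.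
  have [nn FI] := bridgeB1 (3*J+2) (3*J+1) (3*J+2-2) Nn J W (Nn - (3*J+1)) kpos dpos hJ0 (ltac:(lra)) W0 (ltW D0) (ltac:(lra)) hB' hd (ltac:(ring)) (nnB1_1 J Nn hJ1 h8') (nnB1_2 J Nn hJ1 h8') (polyB1 J Nn hJ1 h8').
  apply: (@finish _ _ _ j 1 _ _ _ _ hm D0' W0 WD) => //; first by apply: addr_ge0; [lra | apply: mulr_ge0; [apply: ler0n | exact: W0]].
  + by rewrite hDr hM; exact: nn.
  + by rewrite hDr hM hK; exact: FI.
- case: e => e ej; rewrite e in hm.
  have hK : (m.+1%:R : rat) = 3*J+3 by rewrite hm -addn1 !natrD natrM /J; ring.
  have hM : (m%:R : rat) = 3*J+2 by rewrite hm !natrD natrM /J; ring.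
  have hJ1 : 1 <= J by rewrite /J ler1n.
  rewrite hK in hB' h8'. rewrite hDr hM in D0.
  have hd : (3*J+3-2) * W <= Nn by rewrite (_ : 3*J+3-2 = m%:R - 1); [exact: hd0 | rewrite hM; ring].
  have kpos : 0 < 3*J+3 by lra.
  have dpos : 0 < 3*J+3-2 by lra.
  have [nn FI] := bridgeB2 (3*J+3) (3*J+2) (3*J+3-2) Nn J W (Nn - (3*J+2)) kpos dpos hJ0 (ltac:(lra)) W0 (ltW D0) (ltac:(lra)) hB' hd (ltac:(ring)) (nnB2_1 J Nn hJ1 h8') (nnB2_2 J Nn hJ1 h8') (polyB2 J Nn hJ1 h8').
  apply: (@finish _ _ _ j 2 _ _ _ _ hm D0' W0 WD) => //; first by apply: addr_ge0; [lra | apply: mulr_ge0; [apply: ler0n | exact: W0]].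
  + by rewrite hDr hM; exact: nn.
  + by rewrite hDr hM hK; exact: FI.
- case: e => e ej; rewrite e in hm.
  have hK : (m.+1%:R : rat) = 3 by rewrite hm ej.
  have hM : (m%:R : rat) = 2 by rewrite hm ej.
  rewrite hK in hB' h8'. rewrite hDr hM in D0.
  have h24 : 24 <= Nn by lra.
  have [nn FI] := bridgeB2 3 2 2 Nn 0 W (Nn - 2) (ltac:(lra)) (ltac:(lra)) (lexx 0) (ltac:(lra)) W0 (ltW D0) (ltac:(lra)) hB' h2' (ltac:(ring)) (nnB3_1 Nn h24) (nnB3_2 Nn h24) (polyB3 Nn h24).
  apply: (@finish _ _ _ j 2 _ _ _ _ hm D0' W0 WD) => //; first by apply: addr_ge0; [lra | apply: mulr_ge0; [apply: ler0n | exact: W0]].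
  + by rewrite hDr hM ej; exact: nn.
  + by rewrite hDr hM hK ej; exact: FI.
Qed.

Theorem lemma11 (n i k : nat) :
  (0 < n)%N -> (0 < k)%N -> (1 <= i <= n)%N ->
  k%:R * (i%:R / n%:R) * ((n - i)%:R / n%:R) < 1 :> rat ->
  (8 * k <= n)%N ->
  n%:R / 2 < i%:R :> rat ->
  hyp_tail n i k (i%:R * k%:R / n%:R) >= k%:R / n%:R.
Proof.
move=> n0 k0 /andP[i1 iN] Hq H8 Hh.
have hi2 : (n < 2 * i)%N by rewrite -(ltr_nat rat) natrM; lra.
have Nn0 : 0 < n%:R :> rat by rewrite ltr0n.
have HW : (k * i * (n - i) < n * n)%N.
  rewrite -(ltr_nat rat) !natrM.
  have E : (k%:R * i%:R * (n - i)%:R : rat) = (k%:R * (i%:R / n%:R) * ((n - i)%:R / n%:R)) * (n%:R * n%:R).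
    by field; rewrite gt_eqF.
  by rewrite E -[X in _ < X]mul1r ltr_pM2r ?mulr_gt0.
case: k k0 H8 Hq HW => // m _ H8 Hq HW.
have mi : (m < i)%N by lia.
have CnP : 0 < 'C(n, m.+1)%:R :> rat by rewrite ltr0n bin_gt0; lia.
have Ed : (n%:R * 'C(n.-1,m)%:R : rat) = m.+1%:R * 'C(n,m.+1)%:R by rewrite -!natrM mul_bin_diag.
have El : (m.+1%:R * 'C(i,m.+1)%:R : rat) = (i-m)%:R * 'C(i,m)%:R by rewrite -!natrM mul_bin_left.
have Kpos : 0 < m.+1%:R :> rat by rewrite ltr0n.
have L1 : m.+1%:R * (m.+1%:R * 'C(n,m.+1)%:R) = n%:R * (m.+1%:R * 'C(n.-1,m)%:R) :> rat.
  by rewrite -Ed; ring.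
case: (ltnP (m.+1 * (n - i)) n) => hAB.
- have hx : i%:R * m.+1%:R / n%:R <= m.+1%:R :> rat.
    by rewrite ler_pdivrMr // mulrC; apply: ler_wpM2l; [apply: ler0n | rewrite ler_nat].
  apply: le_trans _ (@tail1 n i m.+1 _ hx).
  rewrite /hyp_pmf subnn bin0 muln1.
  apply: frac_le => //.
  rewrite -(ler_pM2l Kpos).
  have L2 : m.+1%:R * ('C(i,m.+1)%:R * n%:R) = n%:R * ('C(i,m)%:R * (i-m)%:R) :> rat.
    by rewrite mulrA El; ring.
  rewrite L1 L2 ler_pM2l //.
  exact: coreA.
- have hx : i%:R * m.+1%:R / n%:R <= m%:R :> rat.
    rewrite ler_pdivrMr // -!natrM ler_nat. nia.
  apply: le_trans _ (@tail2 n i m _ hx).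
  rewrite /hyp_pmf subnn bin0 muln1 subSnn bin1 natrM -mulrDl.
  apply: frac_le => //.
  rewrite -(ler_pM2l Kpos).
  have L2a : m.+1%:R * (('C(i,m.+1)%:R + 'C(i,m)%:R * (n-i)%:R) * n%:R) = n%:R * (m.+1%:R * 'C(i,m.+1)%:R + m.+1%:R * ('C(i,m)%:R * (n-i)%:R)) :> rat.
    by ring.
  have L2 : m.+1%:R * (('C(i,m.+1)%:R + 'C(i,m)%:R * (n-i)%:R) * n%:R) = n%:R * ('C(i,m)%:R * ((i-m)%:R + m.+1%:R * (n-i)%:R)) :> rat.
    by rewrite L2a El; ring.
  rewrite L1 L2 ler_pM2l //.
  have kw2 : (m.+1 * (n - i) < 2 * n)%N by nia.
  have ki : ((m.+1 - 2) * n < m.+1 * i)%N by nia.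
  apply: coreB => //; [lia | nia].
Qed.
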